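(* Let $1\le n\le N$, $E\in I$, and let $$\gamma\ge\tfrac14\,n^{-1/\rho}\,3^{-(2n+1)d/\rho}\,\kappa^{1/\rho}\,L_0^{-\frac{2p^{(n)}+(2n+1)d}{\rho}},\qquad \tau_n>\frac{2p^{(n)}+(2n+1)d}{\rho}.$$ There exists $\bar L_0^*=\bar L_0^*(n,d,\kappa,\rho,M,\mathrm r_0,s_0^{(n)},r_n)$ such that if $L_0\ge\bar L_0^*$, then there is $\bar g_0^*=\bar g_0^*(n,d,M,\mathrm r_0,s_0^{(n)},\gamma)$ such that for all $|g|>\bar g_0^*$: if the cube $\Lambda^{(n)}_{L_0}(\mathbf u)$ is $(E,\gamma)$-Good, then it is $(E,\tfrac12)$-NS.
   Context: Setting. Fix $N\ge2$, $d\ge1$, $r>0$, $g\ne0$. Points of $\mathbb Z^{nd}$ are $\mathbf x=(x_1,\dots,x_n)$, $x_j\in\mathbb Z^d$, $\|x_j\|=\max_i|x_j^{(i)}|$, $\|\mathbf x\|=\max_j\|x_j\|$, $\langle\mathbf x\rangle=\max\{1,\|\mathbf x\|\}$. Operator $\mathbf H^{(n)}_\omega=\frac1g(\mathbf T+\mathbf U)+\mathbf V(\cdot,\omega)$ on $\ell^2(\mathbb Z^{nd})$: $\mathbf T(\mathbf x,\mathbf y)=\langle y_j-x_j\rangle^{-r}$ if there is $j$ with $x_i=y_i$ for all $i\ne j$, else $0$; $\mathbf U(\mathbf x)=\sum_{j_1<j_2}U(x_{j_1},x_{j_2})$, $U$ symmetric, $|U|\le M_1$, $U(x,x')=0$ if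 $\|x-x'\|\ge\mathrm r_0$ ($\mathrm r_0\ge1$); $\mathbf V(\mathbf x,\omega)=\sum_jV(x_j,\omega)$, $V(x,\omega)$ i.i.d. with distribution $\mu$, $\operatorname{supp}\mu\subset[-M,M]$, Hölder continuous of order $\rho>0$ with $\mathcal K_\rho(\mu)>0$ (where $1/\mathcal K_\rho(\mu)=\inf_{\kappa>0}\sup_{0<|a-b|\le\kappa}|a-b|^{-\rho}\mu([a,b])$), and $\kappa\in(0,\mathcal K_\rho(\mu))$ fixed. Cubes $\Lambda^{(n)}_L(\mathbf u)=\{\mathbf x:\|\mathbf x-\mathbf u\|\le L\}$; $\mathbf H^{(n)}_\Lambda$ = restriction to $\Lambda$, $\mathbf G^{(n)}_\Lambda(E)=(\mathbf H^{(n)}_\Lambda-E)^{-1}$. Sobolev norm of a matrix $\mathcal M$ on $X\times Y$: $\|\mathcal M\|_s^2=C_0\sum_{\mathbf v\in X-Y}(\sup_{\mathbf x-\mathbf y=\mathbf v}|\mathcal M(\mathbf x,\mathbf y)|)^2\langle\mathbf v\rangle^{2s}$, $C_0=C_0(s_0^{(n)})>0$ fixed. With $\tau_n\ge0$, $nd/2<s_0^{(n)}\le r_n<r-nd/2$: $\Lambda^{(n)}_L(\mathbf u)$ is $(E,\tfrac12)$-NS if $\mathbf G^{(n)}_{\Lambda^{(n)}_L(\mathbf u)}(E)$ exists and $\|\mathbf G^{(n)}_{\Lambda^{(n)}_L(\mathbf u)}(E)\|_s\le L^{\tau_n+s/2}$ for all $s\in[s_0^{(n)},r_n]$. Parameters: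 $I=[-MN-1,MN+1]$, $p^{(n)}=18^{N-n}p_0$, $p_0\ge20Nd$. For $E\in I$, $\gamma>0$, an $n$-particle cube $\Lambda^{(n)}_L(\mathbf u)$ is $(E,\gamma)$-Good if $\min_{\mathbf x\in\Lambda^{(n)}_L(\mathbf u)}|\mathbf V(\mathbf x,\omega)-E|>\gamma$. *)

(* Defs.v *)
From HB Require Import structures.
From mathcomp Require Import all_boot all_order all_algebra.
From mathcomp Require Import all_classical all_reals all_analysis.
Set Implicit Arguments. Unset Strict Implicit. Unset Printing Implicit Defensive.
Import Order.TTheory GRing.Theory Num.Theory.
Local Open Scope ring_scope.

Definition site (d : nat) := 'I_d -> int.
Definition pt (n d : nat) := 'I_n -> site d.

Definition site_norm d (v : site d) : nat := \max_(i < d) `|v i|%N.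
Definition pt_norm n d (x : pt n d) : nat := \max_(j < n) site_norm (x j).
Definition site_sub d (a b : site d) : site d := fun i => a i - b i.
Definition pt_sub n d (x y : pt n d) : pt n d := fun j => site_sub (x j) (y j).
Definition site_br d (v : site d) : nat := maxn 1 (site_norm v).
Definition pt_br n d (x : pt n d) : nat := maxn 1 (pt_norm x).

Section Ham.
Variable R : realType.

(* T(x,y) = <y_j - x_j>^{-r} if x and y differ at most in the j-th particle *)
Definition Tkin n d (r : R) (x y : pt n d) : R :=
  if `[< exists j : 'I_n, forall i : 'I_n, i != j -> x i = y i >] then
    \big[Order.max/0]_(j < n | `[< forall i : 'I_n, i != j -> x i = y i >])
        ((site_br (site_sub (y j) (x j)))%:R `^ (- r))
  else 0.
(* Note: if x,y differ exactly in particle j, j is the unique admissible index;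
   if x = y every index gives <0>^{-r} = 1.  So the max is just the value
   <y_j - x_j>^{-r} of the definition. *)

Definition Uint n d (U : site d -> site d -> R) (x : pt n d) : R :=
  \sum_(j1 < n) \sum_(j2 < n | (j1 < j2)%N) U (x j1) (x j2).

Definition Vpot n d (V : site d -> R) (x : pt n d) : R := \sum_(j < n) V (x j).

Definition Hmat n d (r g : R) (U : site d -> site d -> R) (V : site d -> R)
  (x y : pt n d) : R :=
  (Tkin r x y + (if `[< x = y >] then Uint U x else 0)) / g
  + (if `[< x = y >] then Vpot V x else 0).

(* Points of the cube Lambda_L(u) = {x : ||x - u|| <= L} (L : nat) are
   parametrised bijectively by offsets w : 'I_n * 'I_d -> 'I_(2L+1),
   x_j^(i) = u_j^(i) + w(j,i) - L. *)
Definition cube_idx (n d L : nat) := {ffun 'I_n * 'I_d -> 'I_(L.*2.+1)}.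
Definition cube_pt n d L (u : pt n d) (w : cube_idx n d L) : pt n d :=
  fun j i => u j i + (w (j, i))%:Z - L%:Z.

(* Differences of two cube points: offsets in 'I_(4L+1), shifted by 2L. *)
Definition diff_idx (n d L : nat) := {ffun 'I_n * 'I_d -> 'I_((L.*2).*2.+1)}.
Definition diff_pt n d L (v : diff_idx n d L) : pt n d :=
  fun j i => (v (j, i))%:Z - (L.*2)%:Z.

Definition HcubeE n d L (r g : R) U V (u : pt n d) (E : R)
  (a b : cube_idx n d L) : R :=
  Hmat r g U V (cube_pt u a) (cube_pt u b) - (if a == b then E else 0).

Definition is_resolvent n d L (r g : R) U V (u : pt n d) (E : R)
  (G : cube_idx n d L -> cube_idx n d L -> R) : Prop :=
  (forall a b, \sum_c HcubeE r g U V u E a c * G c b = (a == b)%:R) /\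
  (forall a b, \sum_c G a c * HcubeE r g U V u E c b = (a == b)%:R).

(* Sobolev norm of a matrix on Lambda x Lambda:
   ||M||_s^2 = C0 sum_{v in Lambda - Lambda} (sup_{x-y=v} |M(x,y)|)^2 <v>^{2s}.
   Difference vectors not realised contribute 0 (empty max = 0). *)
Definition sob_norm n d L (C0 s : R) (u : pt n d)
  (M : cube_idx n d L -> cube_idx n d L -> R) : R :=
  Num.sqrt (C0 * \sum_(v : diff_idx n d L)
    (\big[Order.max/0]_(ab : cube_idx n d L * cube_idx n d L |
         `[< pt_sub (cube_pt u ab.1) (cube_pt u ab.2) = diff_pt v >])
        `|M ab.1 ab.2|) ^+ 2 * ((pt_br (diff_pt v))%:R `^ (2 * s))).

Definition NS n d L (r g : R) U V (u : pt n d) (E C0 tau s0 rn : R) : Prop :=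
  exists G, @is_resolvent n d L r g U V u E G /\
    forall s, s0 <= s <= rn -> sob_norm C0 s u G <= L%:R `^ (tau + s / 2).

Definition Good n d L (V : site d -> R) (u : pt n d) (E gamma : R) : Prop :=
  forall a : cube_idx n d L, `|Vpot V (cube_pt u a) - E| > gamma.

Definition holder_inv (mu : {measure set R -> \bar R}) (rho : R) : \bar R :=
  ereal_inf [set ereal_sup [set z | exists a b : R, 0 < b - a <= k /\
                   z = (((b - a) `^ (- rho))%:E * mu `[a, b]%classic)%E]
            | k in [set k : R | 0 < k]].
(* K_rho(mu) as an extended real (1/0 = +oo, 1/+oo = 0) *)
Definition Krho (mu : {measure set R -> \bar R}) (rho : R) : \bar R :=
  let D := holder_inv mu rho in
  if D == 0%E then +oo%E else if D == +oo%E then 0%E else ((fine D)^-1)%:E.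

End Ham.

(* Main.v *)
Require Import Defs.
From HB Require Import structures.
From mathcomp Require Import all_boot all_order all_algebra.
From mathcomp Require Import all_classical all_reals all_analysis.
From mathcomp Require Import ring lra zify.
Import Order.TTheory GRing.Theory Num.Theory.
Local Open Scope ring_scope.

Section DD.
Variable R : realFieldType.

Lemma sum_split_row (T : finType) (A B : T -> T -> R) (D : T -> R) (x : T -> R) a :
  (forall a b, A a b = B a b + (if a == b then D a else 0)) ->
  \sum_c A a c * x c = \sum_c B a c * x c + D a * x a.
Proof.
move=> hA; rewrite (eq_bigr (fun c => B a c * x c + (if a == c then D a else 0) * x c)).
  rewrite big_split /=; congr (_ + _).
  rewrite (bigD1 a) //= eqxx big1 ?addr0 // => c; rewrite eq_sym => /negbTE ->; by rewrite mul0r.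
by move=> c _; rewrite hA mulrDl.
Qed.

Lemma sum_split_col (T : finType) (A B : T -> T -> R) (D : T -> R) (x : T -> R) b :
  (forall a b, A a b = B a b + (if a == b then D a else 0)) ->
  \sum_c x c * A c b = \sum_c x c * B c b + x b * D b.
Proof.
move=> hA; rewrite (eq_bigr (fun c => x c * B c b + x c * (if c == b then D c else 0))).
  rewrite big_split /=; congr (_ + _).
  rewrite (bigD1 b) //= eqxx big1 ?addr0 // => c /negbTE ->; by rewrite mulr0.
by move=> c _; rewrite hA mulrDr.
Qed.

Lemma sum_bound (T : finType) (F : T -> R) (x : T -> R) (e m : R) :
  0 <= m -> (forall c, `|x c| <= m) -> \sum_c `|F c| <= e ->
  `|\sum_c F c * x c| <= e * m.
Proof.
move=> m0 hx hF; apply: le_trans (ler_norm_sum _ _ _) _.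
apply: le_trans (_ : \sum_c `|F c| * m <= _).
  by apply: ler_sum => c _; rewrite normrM ler_wpM2l.
by rewrite -mulr_suml ler_wpM2r.
Qed.

Lemma bigmax_ub (T : finType) (F : T -> R) c : F c <= \big[Order.max/0]_c F c.
Proof. exact: le_bigmax. Qed.

Lemma bigmax_lub (T : finType) (F : T -> R) m : 0 <= m -> (forall c, F c <= m) ->
  \big[Order.max/0]_c F c <= m.
Proof. by move=> m0 h; apply: bigmax_le => // c _. Qed.

Lemma bigmax_ge0 (T : finType) (F : T -> R) : 0 <= \big[Order.max/0]_c F c.
Proof. by elim/big_rec: _ => // i x _ hx; rewrite le_max hx orbT. Qed.

Lemma sum_bound' (T : finType) (F : T -> R) (x : T -> R) (e m : R) :
  0 <= m -> (forall c, `|x c| <= m) -> \sum_c `|F c| <= e ->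
  `|\sum_c x c * F c| <= e * m.
Proof.
move=> m0 hx hF; under eq_bigr do rewrite mulrC; exact: sum_bound.
Qed.

Lemma dd_inv (T : finType) (A B : T -> T -> R) (D : T -> R) (gam e : R) :
  0 < gam -> (forall a, gam < `|D a|) ->
  (forall a, \sum_c `|B a c| <= e) -> (forall b, \sum_c `|B c b| <= e) ->
  0 <= e -> e <= gam / 2 ->
  (forall a b, A a b = B a b + (if a == b then D a else 0)) ->
  exists G : T -> T -> R,
   [/\ (forall a b, \sum_c A a c * G c b = (a == b)%:R),
       (forall a b, \sum_c G a c * A c b = (a == b)%:R) &
       (forall a b, `|G a b - (a == b)%:R / D a| <= 2 * e / gam ^+ 2)].
Proof.
move=> g0 hD hr hc e0 eg hA.
have Dn0 a : D a != 0 by rewrite -normr_eq0 gt_eqF // (lt_trans g0 (hD a)).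
pose A' := \matrix_(i, j) A (enum_val i) (enum_val j) : 'M[R]_#|T|.
have hdet : \det A' != 0.
  apply/negP => /det0P [v vn0 vA].
  pose w c := v 0 (enum_rank c).
  have hw b : \sum_c w c * A c b = 0.
    move/matrixP: vA => /(_ 0 (enum_rank b)); rewrite !mxE /= => h; apply: etrans h.
    rewrite [RHS](reindex enum_rank) /=; last by apply: onW_bij; exact: enum_rank_bij.
    by apply: eq_bigr => c _; rewrite mxE !enum_rankK.
  pose m := \big[Order.max/0]_c `|w c|.
  have m0 : 0 <= m := bigmax_ge0 _ _.
  have hm : m <= m / 2.
    apply: bigmax_lub; first by rewrite divr_ge0.
    move=> b; have := hw b; rewrite (sum_split_col _ _ _ _ _ _ hA) => /eqP; rewrite addr_eq0 => /eqP hb.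
    have h1 : `|w b * D b| <= e * m.
      by rewrite -normrN -hb; apply: sum_bound' => // c; apply: (bigmax_ub _ (fun c => `|w c|)).
    have h2 : gam * `|w b| <= gam * (m / 2).
      apply: le_trans (_ : `|D b| * `|w b| <= _).
        exact: ler_pM (ltW g0) (normr_ge0 _) (ltW (hD b)) (lexx _).
      rewrite mulrC -normrM; apply: le_trans h1 _.
      nra.
    by rewrite ler_pM2l in h2.
  have mz : m = 0 by lra.
  apply/negP: vn0; rewrite negbK; apply/eqP/matrixP => i k; rewrite mxE (ord1 i).
  have := bigmax_ub _ (fun c => `|w c|) (enum_val k).
  rewrite -/m mz /w enum_valK => h; apply/eqP; by rewrite -normr_le0.
have hU : A' \in unitmx by rewrite unitmxE unitfE.
pose G a b := invmx A' (enum_rank a) (enum_rank b).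
have hR a b : \sum_c A a c * G c b = (a == b)%:R.
  move/matrixP: (mulmxV hU) => /(_ (enum_rank a) (enum_rank b)); rewrite !mxE /=.
  rewrite (inj_eq (@enum_rank_inj T)) => h; apply: etrans h.
  rewrite [RHS](reindex enum_rank) /=; last by apply: onW_bij; exact: enum_rank_bij.
  by apply: eq_bigr => c _; rewrite mxE !enum_rankK.
have hL a b : \sum_c G a c * A c b = (a == b)%:R.
  move/matrixP: (mulVmx hU) => /(_ (enum_rank a) (enum_rank b)); rewrite !mxE /=.
  rewrite (inj_eq (@enum_rank_inj T)) => h; apply: etrans h.
  rewrite [RHS](reindex enum_rank) /=; last by apply: onW_bij; exact: enum_rank_bij.
  by apply: eq_bigr => c _; rewrite mxE !enum_rankK.
exists G; split => // a b.
pose m := \big[Order.max/0]_c `|G c b|.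
have m0 : 0 <= m := bigmax_ge0 _ _.
have hs c : `|D c * G c b - (c == b)%:R| <= e * m.
  have := hR c b; rewrite (sum_split_row _ _ _ _ _ _ hA) => <-.
  rewrite opprD addrCA subrr addr0 normrN; apply: sum_bound => // c'.
  exact: (bigmax_ub _ (fun c => `|G c b|)).
have hGc c : gam * `|G c b| <= 1 + e * m.
  apply: le_trans (_ : `|D c| * `|G c b| <= _); first exact: ler_pM (ltW g0) (normr_ge0 _) (ltW (hD c)) (lexx _).
  rewrite -normrM.
  have -> : D c * G c b = (D c * G c b - (c == b)%:R) + (c == b)%:R by rewrite subrK.
  apply: le_trans (ler_normD _ _) _; rewrite addrC lerD //.
  by case: (c == b); rewrite ?normr1 ?normr0.
have hm1 : m <= (1 + e * m) / gam.
  apply: bigmax_lub; first by apply: divr_ge0; [nra | exact: ltW].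
  by move=> c; rewrite ler_pdivlMr // mulrC.
have hm2 : gam * m <= 2.
  rewrite ler_pdivlMr // in hm1; nra.
have -> : G a b - (a == b)%:R / D a = (D a * G a b - (a == b)%:R) / D a.
  by field.
rewrite normrM normrV ?unitfE //.
have hDa := hD a.
have Dp : 0 < `|D a| := lt_trans g0 hDa.
rewrite ler_pdivrMr //.
apply: le_trans (hs a) _.
have ig0 : 0 < gam^-1 by rewrite invr_gt0.
have hig : gam * gam^-1 = 1 by rewrite divff // gt_eqF.
rewrite expr2 invfM.
have hDa' := ltW hDa.
have gn0 : gam != 0 by rewrite gt_eqF.
have eig : 0 <= e * gam^-1 by rewrite mulr_ge0 // ltW.
have h3 : e * m <= 2 * e * gam^-1.
  have -> : e * m = e * (gam * m) * gam^-1 by field.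
  nra.
apply: le_trans h3 _.
have h4 : 2 * e * gam^-1 = 2 * e * (gam^-1 * gam^-1) * gam by field.
have eig2 : 0 <= 2 * e * (gam^-1 * gam^-1) by rewrite !mulr_ge0 // ltW.
rewrite h4; nra.
Qed.
End DD.

Section C.
Variable R : realType.

Lemma cube_pt_inj n d L (u : pt n d) : injective (@cube_pt n d L u).
Proof.
move=> a b H; apply/ffunP => -[j i].
have := congr1 (fun f => f j i) H; rewrite /cube_pt /= => /addIr /addrI [] h; exact: val_inj.
Qed.

Lemma cube_eqb n d L (u : pt n d) (a b : cube_idx n d L) :
  `[< cube_pt u a = cube_pt u b >] = (a == b).
Proof.
case: (eqVneq a b) => [->|hne]; first by rewrite asboolT.
by rewrite asboolF // => /cube_pt_inj /eqP; rewrite (negbTE hne).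
Qed.

Lemma bigmaxP_ge0 (I : finType) (P : pred I) (F : I -> R) :
  0 <= \big[Order.max/0]_(i | P i) F i.
Proof. by elim/big_rec: _ => // i x _ hx; rewrite le_max hx orbT. Qed.

Lemma bigmax_le' (I : finType) (P : pred I) (F : I -> R) m :
  0 <= m -> (forall i, P i -> F i <= m) -> \big[Order.max/0]_(i | P i) F i <= m.
Proof. by move=> m0 h; elim/big_rec: _ => // i x Pi hx; rewrite ge_max hx h. Qed.

Lemma Tkin_bd n d (r : R) (x y : pt n d) : 0 <= r -> `|Tkin r x y| <= 1.
Proof.
move=> r0; rewrite /Tkin; case: ifP => _; last by rewrite normr0.
rewrite ger0_norm ?bigmaxP_ge0 //.
apply: bigmax_le => // j _.
have h1 : 1 <= (site_br (site_sub (y j) (x j)))%:R :> R.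
  by rewrite ler1n /site_br leq_maxl.
rewrite powRN invf_le1; last by apply: powR_gt0; lra.
apply: le_trans (_ : (site_br (site_sub (y j) (x j)))%:R `^ 0 <= _).
  by rewrite powRr0.
exact: ler_powR.
Qed.

Lemma Uint_bd n d (U : site d -> site d -> R) (M1 : R) (x : pt n d) :
  (forall x x', `|U x x'| <= M1) -> 0 <= M1 ->
  `|Uint U x| <= n%:R * (n%:R * M1).
Proof.
move=> hU M0; rewrite /Uint; apply: le_trans (ler_norm_sum _ _ _) _.
apply: le_trans (_ : \sum_(j1 < n) (n%:R * M1) <= _); last first.
  by rewrite sumr_const card_ord !mulr_natl.
apply: ler_sum => j1 _; apply: le_trans (ler_norm_sum _ _ _) _.
rewrite big_mkcond /=.
apply: le_trans (_ : \sum_(j2 < n) M1 <= _); last first.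
  by rewrite sumr_const card_ord !mulr_natl.
by apply: ler_sum => j2 _; case: ifP.
Qed.

Lemma br_bd n d L (v : diff_idx n d L) : (1 <= L)%N -> (pt_br (diff_pt v) <= L.*2)%N.
Proof.
move=> L1; rewrite /pt_br geq_max; apply/andP; split; first lia.
apply/bigmax_leqP => j _; apply/bigmax_leqP => i _.
rewrite /diff_pt; move: (v (j, i)) => w; move: (ltn_ord w); move: (nat_of_ord w) => k hk. lia.
Qed.

Lemma v0_lt L : (L.*2 < (L.*2).*2.+1)%N. Proof. lia. Qed.
Definition v0 n d L : diff_idx n d L := [ffun _ => Ordinal (v0_lt L)].

Lemma br_v0 n d L : pt_br (diff_pt (v0 n d L)) = 1%N.
Proof.
rewrite /pt_br /pt_norm big1 // => j _; rewrite /site_norm big1 // => i _.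
by rewrite /diff_pt ffunE /= subrr.
Qed.

Lemma diff_v0 n d L (v : diff_idx n d L) : (forall j i, diff_pt v j i = 0) -> v = v0 n d L.
Proof.
move=> H; apply/ffunP => -[j i]; rewrite ffunE; apply: val_inj => /=.
have := H j i; rewrite /diff_pt /= => /eqP; rewrite subr_eq0 => /eqP [] //.
Qed.

Lemma sob_bd n d L (C0 s rn : R) (u : pt n d) (G : cube_idx n d L -> cube_idx n d L -> R)
  (gam del : R) :
  (1 <= L)%N -> 0 <= C0 -> 0 <= s <= rn -> 0 < gam -> 0 <= del ->
  (forall a, `|G a a| <= (1 + del) / gam) -> (forall a b, a != b -> `|G a b| <= del / gam) ->
  sob_norm C0 s u G <= Num.sqrt (C0 * (((1 + del) / gam) ^+ 2 +
     #|diff_idx n d L|%:R * ((del / gam) ^+ 2 * (L.*2)%:R `^ (2 * rn)))).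
Proof.
move=> L1 C00 /andP [s0 srn] g0 d0 hdiag hoff.
have hg1 : 0 <= (1 + del) / gam by rewrite divr_ge0 //; lra.
have hg2 : 0 <= del / gam by rewrite divr_ge0 //; lra.
have W0 : 0 <= (L.*2)%:R `^ (2 * rn) :> R by apply: powR_ge0.
rewrite /sob_norm ler_sqrt; last first.
  apply: mulr_ge0 => //; apply: addr_ge0; first exact: exprn_ge0.
  by apply: mulr_ge0 => //; apply: mulr_ge0 => //; exact: exprn_ge0.
apply: ler_pM => //; first by rewrite sumr_ge0 // => v _; rewrite mulr_ge0 ?exprn_ge0 ?powR_ge0 ?bigmaxP_ge0.
rewrite (bigD1 (v0 n d L)) //=; apply: lerD.
{ rewrite br_v0 powR1 mulr1; rewrite !expr2; apply: ler_pM; rewrite ?bigmaxP_ge0 //.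
  all: elim/big_rec: _ => // -[a b] x _ hx /=; rewrite ge_max hx andbT.
  all: case: (eqVneq a b) => [->|hne]; [exact: hdiag | apply: le_trans (hoff _ _ hne) _].
  all: apply: ler_wpM2r; rewrite ?invr_ge0 ?ltW //; lra. }
apply: le_trans (_ : \sum_(v | v != v0 n d L) (del / gam) ^+ 2 * (L.*2)%:R `^ (2 * rn) <= _).
  apply: ler_sum => v hv; apply: ler_pM; rewrite ?exprn_ge0 ?bigmaxP_ge0 ?powR_ge0 //.
  { rewrite !expr2; apply: ler_pM; rewrite ?bigmaxP_ge0 //.
    all: elim/big_rec: _ => // -[a b] x /= /asboolP H hx; rewrite ge_max hx andbT.
    all: case: (eqVneq a b) => [eab|hne]; last exact: hoff.
    all: exfalso; move/eqP: hv; apply; apply: diff_v0 => j i.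
    all: have := congr1 (fun f => f j i) H; rewrite eab /pt_sub /site_sub /= subrr => <- //. }
  apply: le_trans (_ : (L.*2)%:R `^ (2 * s) <= _).
    apply: ge0_ler_powR; rewrite ?nnegrE ?ler_nat ?br_bd //; lra.
  apply: ler_powR; last lra.
  rewrite ler1n; lia.
rewrite big_mkcond /=.
apply: le_trans (_ : \sum_v (del / gam) ^+ 2 * (L.*2)%:R `^ (2 * rn) <= _).
  by apply: ler_sum => v _; case: ifP => // _; rewrite mulr_ge0 ?exprn_ge0.
by rewrite sumr_const (mulr_natl ((del / gam) ^+ 2 * (L.*2)%:R `^ (2 * rn))).
Qed.



Lemma Hsplit n d L (r g : R) U V (u : pt n d) E (a b : cube_idx n d L) :
  HcubeE r g U V u E a b =
  (Tkin r (cube_pt u a) (cube_pt u b) + (if a == b then Uint U (cube_pt u a) else 0)) / g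
  + (if a == b then Vpot V (cube_pt u a) - E else 0).
Proof.
rewrite /HcubeE /Hmat cube_eqb; case: (eqVneq a b) => [->|_] /=.
  by rewrite addrA.
by rewrite subr0.
Qed.

Lemma powRD' (x p q : R) : 0 < x -> x `^ (p + q) = x `^ p * x `^ q.
Proof. by move=> x0; rewrite powRD // (gt_eqF x0) implybT. Qed.

Lemma fin_alg (C0 X gam c la Y P : R) : 0 < C0 -> 0 < gam -> 0 < c -> 0 < la ->
  c <= gam * la -> 4 * C0 / c ^+ 2 <= Y -> la ^+ 2 * Y <= P ^+ 2 ->
  X * gam ^+ 2 <= 4 -> C0 * X <= P ^+ 2.
Proof.
move=> C00 g0 c0 la0 hc hY hP hX.
apply: le_trans hP.
have ic0 : 0 < c^-1 by rewrite invr_gt0.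
have hic : c * c^-1 = 1 by rewrite divff // gt_eqF.
have hY' : 4 * C0 * (c^-1 * c^-1) <= Y by move: hY; rewrite expr2 invfM mulrA.
have h1 : 1 <= gam * la * c^-1.
  by rewrite -hic; apply: ler_wpM2r => //; exact: ltW.
have h2 : C0 * X * gam ^+ 2 <= 4 * C0 * (gam * la * c^-1) ^+ 2.
  have : 1 <= (gam * la * c^-1) ^+ 2 by rewrite expr2; nra.
  nra.
have h3 : C0 * X <= 4 * C0 * (la * c^-1) ^+ 2.
  rewrite -(ler_pM2r (exprn_gt0 2 g0)).
  apply: le_trans h2 _.
  have -> : 4 * C0 * (gam * la * c^-1) ^+ 2 = 4 * C0 * (la * c^-1) ^+ 2 * gam ^+ 2 by ring.
  by [].
apply: le_trans h3 _.
have : 0 <= la ^+ 2 by rewrite exprn_ge0 // ltW.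
rewrite exprMn; nra.
Qed.

End C.

Local Open Scope classical_set_scope.
Local Open Scope ring_scope.

Theorem lemma4p2
  (R : realType) (N d : nat) (r : R) (U : site d -> site d -> R) (M1 r0 : R)
  (mu : probability R R) (M rho kappa : R) (p0 C0 : R)
  (n : nat) (s0 rn : R) :
  (2 <= N)%N -> (1 <= d)%N -> 0 < r ->
  (* interaction *)
  (forall x x', U x x' = U x' x) -> (forall x x', `|U x x'| <= M1) ->
  1 <= r0 -> (forall x x', r0 <= (site_norm (site_sub x x'))%:R -> U x x' = 0) ->
  (* single-site distribution *)
  0 < M -> mu (~` `[- M, M]%classic) = 0%E ->
  0 < rho -> (0 < Krho mu rho)%E ->
  0 < kappa -> (kappa%:E < Krho mu rho)%E ->
  (* parameters *)
  (1 <= n <= N)%N ->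
  (n * d)%:R / 2 < s0 -> s0 <= rn -> rn < r - (n * d)%:R / 2 -> 0 < C0 ->
  (20 * N * d)%:R <= p0 ->
  let pn := (18 ^ (N - n))%:R * p0 in
  let a := (2 * pn + ((2 * n + 1) * d)%:R) / rho in
  exists L0bar : R, forall L0 : nat, L0bar <= L0%:R ->
  forall gamma : R,
    4^-1 * n%:R `^ (- 1 / rho) * 3 `^ (- ((2 * n + 1) * d)%:R / rho)
      * kappa `^ (1 / rho) * L0%:R `^ (- a) <= gamma ->
  exists g0bar : R, forall g : R, g != 0 -> g0bar < `|g| ->
  forall (tau : R), a < tau ->
  forall (E : R), - M * N%:R - 1 <= E <= M * N%:R + 1 ->
  forall (V : site d -> R), (forall x, - M <= V x <= M) ->
  forall u : pt n d,
    Good L0 V u E gamma -> NS L0 r g U V u E C0 tau s0 rn.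
Proof.
move=> hN hd hr hsym hU hr0 hUr hM hmu hrho hK hkap hkK hn hs0 hs0rn hrn hC0 hp0 pn a.
have n1 : (1 <= n)%N by case/andP: hn.
have nR : 0 < n%:R :> R by rewrite ltr0n.
set c := 4^-1 * n%:R `^ (- 1 / rho) * 3 `^ (- ((2 * n + 1) * d)%:R / rho) * kappa `^ (1 / rho).
have c0 : 0 < c.
  rewrite /c !mulr_gt0 ?powR_gt0 //; lra.
have s0p : 0 < s0.
  apply: le_lt_trans hs0; rewrite divr_ge0 //.
exists (Num.max 1 ((4 * C0 / c ^+ 2) `^ (s0^-1))).
move=> L0 hL0 gam hgam.
move: hL0; rewrite ge_max => /andP [L1 hq].
have L1n : (1 <= L0)%N by rewrite -(ler_nat R).
have L0p : 0 < L0%:R :> R by lra.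
set la := L0%:R `^ a.
have la0 : 0 < la by apply: powR_gt0.
have gl : c <= gam * la.
  by move: hgam; rewrite powRN -/la -ler_pdivrMr.
have gam0 : 0 < gam.
  have : 0 < gam * la := lt_le_trans c0 gl.
  by rewrite pmulr_lgt0.
set K := #|cube_idx n d L0|%:R : R.
set K' := #|diff_idx n d L0|%:R : R.
set W := (L0.*2)%:R `^ (2 * rn) : R.
have K0 : 0 <= K by [].
have K'0 : 0 <= K' by [].
have W0 : 0 <= W by apply: powR_ge0.
set del := (2 * (K' * W + 1))^-1.
have KW0 : 0 <= K' * W by rewrite mulr_ge0.
have del0 : 0 < del by rewrite invr_gt0; lra.
have hdel : del * (2 * (K' * W + 1)) = 1 by rewrite mulVf //; lra.
have del2 : del <= 1/2 by nra.
have qdel : K' * W * del <= 1/2 by nra.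
have M10 : 0 <= M1 := le_trans (normr_ge0 _) (hU (fun _ => 0) (fun _ => 0)).
set beta := 1 + n%:R * (n%:R * M1).
have beta0 : 0 < beta by rewrite /beta; have := mulr_ge0 (ltW nR) (mulr_ge0 (ltW nR) M10); lra.
exists (2 * K * beta / (del * gam)).
move=> g gn0 hg tau htau E hE V hV u hgood.
have g0 : 0 < `|g| by rewrite normr_gt0.
set e := K * beta / `|g|.
have e0 : 0 <= e by rewrite /e divr_ge0 // mulr_ge0 // ltW.
have he : e <= del * gam / 2.
  move: hg; rewrite ltr_pdivrMr ?mulr_gt0 // => hg.
  rewrite /e ler_pdivrMr //; nra.
have hBm : forall a b : cube_idx n d L0,
   `|(Tkin r (cube_pt u a) (cube_pt u b) + (if a == b then Uint U (cube_pt u a) else 0)) / g|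
      <= beta / `|g|.
  move=> a0 b0; rewrite normrM normfV ler_pM2r ?invr_gt0 //.
  apply: le_trans (ler_normD _ _) _; apply: lerD; first exact: Tkin_bd (ltW hr).
  case: ifP => _; first exact: Uint_bd.
  have -> : `|0 : R| = 0 := normr0 _.
  by rewrite !mulr_ge0 // ltW.
have hrow : forall a0 : cube_idx n d L0, \sum_c `|(Tkin r (cube_pt u a0) (cube_pt u c) + (if a0 == c then Uint U (cube_pt u a0) else 0)) / g| <= e.
  move=> a0; apply: le_trans (_ : \sum_(c : cube_idx n d L0) beta / `|g| <= _).
    by apply: ler_sum => c1 _; exact: hBm.
  by rewrite sumr_const /e -mulr_natl mulrA.
have hcol : forall b0 : cube_idx n d L0, \sum_c `|(Tkin r (cube_pt u c) (cube_pt u b0) + (if c == b0 then Uint U (cube_pt u c) else 0)) / g| <= e.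
  move=> b0; apply: le_trans (_ : \sum_(c : cube_idx n d L0) beta / `|g| <= _).
    by apply: ler_sum => c1 _; exact: hBm.
  by rewrite sumr_const /e -mulr_natl mulrA.
have heg : e <= gam / 2 by nra.
have [G [hR hL hb]] := @dd_inv _ _ (HcubeE r g U V u E)
  (fun a b => (Tkin r (cube_pt u a) (cube_pt u b) + (if a == b then Uint U (cube_pt u a) else 0)) / g)
  (fun a => Vpot V (cube_pt u a) - E) gam e gam0 hgood hrow hcol e0 heg (@Hsplit _ _ _ _ _ _ _ _ _ _).
exists G; split; first by split.
move=> s /andP [hs1 hs2].
have s0' : 0 <= s by lra.
have gn0' : gam != 0 by rewrite gt_eqF.
have h2e : 2 * e / gam ^+ 2 <= del / gam.
  rewrite ler_pdivrMr ?exprn_gt0 //.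
  have -> : del / gam * gam ^+ 2 = del * gam by field.
  lra.
have hoff : forall a b, a != b -> `|G a b| <= del / gam.
  move=> a0 b0 hne; have := hb a0 b0; rewrite (negbTE hne) mul0r subr0 => h.
  exact: le_trans h h2e.
have hdiag : forall a, `|G a a| <= (1 + del) / gam.
  move=> a0; have := hb a0 a0; rewrite eqxx mul1r => h.
  have hDa := hgood a0.
  have hinv : `|(Vpot V (cube_pt u a0) - E)^-1| <= gam^-1.
    rewrite normfV lef_pV2 ?posrE ?ltW //; exact: lt_trans gam0 hDa.
  have -> : G a0 a0 = (G a0 a0 - (Vpot V (cube_pt u a0) - E)^-1) + (Vpot V (cube_pt u a0) - E)^-1.
    by rewrite subrK.
  apply: le_trans (ler_normD _ _) _.
  rewrite mulrDl mul1r addrC; apply: lerD => //; exact: le_trans h h2e.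
apply: le_trans (@sob_bd R n d L0 C0 s rn u G gam del L1n (ltW hC0) _ gam0 (ltW del0) hdiag hoff) _.
  by rewrite s0' hs2.
have P0 : 0 <= L0%:R `^ (tau + s / 2) :> R by apply: powR_ge0.
rewrite -(ger0_norm P0) -sqrtr_sqr ler_sqrt ?exprn_ge0 //.
apply: (@fin_alg R C0 _ gam c la (L0%:R `^ s0)) => //.
- have q00 : 0 <= 4 * C0 / c ^+ 2.
    apply: divr_ge0; [lra | exact: exprn_ge0 (ltW c0)].
  have hq' : (4 * C0 / c ^+ 2) `^ s0^-1 `^ s0 <= L0%:R `^ s0.
    by apply: ge0_ler_powR; rewrite ?nnegrE ?powR_ge0 //; lra.
  by rewrite -powRrM mulVf ?gt_eqF // powRr1 in hq'.
- rewrite !expr2 /la -!powRD' //; apply: ler_powR => //; lra.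
- have -> : (((1 + del) / gam) ^+ 2 + K' * ((del / gam) ^+ 2 * W)) * gam ^+ 2
     = (1 + del) ^+ 2 + K' * W * del * del by field.
  nra.
Qed.
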